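(* Let $\theta$ be an angle and let $\mathcal P=(p_1,\dots,p_k)$ be a $\theta$-path from $p_1$ to $p_k$. Then $\mathcal P$ is increasing-chord, i.e., it is self-approaching both from $p_1$ to $p_k$ and from $p_k$ to $p_1$.
   Context: The slope of a segment $\overline{uv}$ is the angle of the clockwise rotation around $u$ that brings $\overline{uv}$ to coincide with the positive $x$-axis; slopes are defined modulo $360^\circ$. A segment $\overline{uv}$ (directed from $u$ to $v$) is a $\theta$-edge if its slope lies in $[\theta-45^\circ,\theta+45^\circ]$ (modulo $360^\circ$). A geometric path $(p_1,\dots,p_k)$ is a $\theta$-path from $p_1$ to $p_k$ if $\overline{p_ip_{i+1}}$ is a $\theta$-edge for every $1\le i\le k-1$. A geometric path $(v_1,\dots,v_k)$ is self-approaching from $v_1$ to $v_k$ if for every three distinct points $a,b,c$ appearing in this order along the path from $v_1$ to $v_k$ (possibly interior to edges) $|\overline{bc}|<|\overline{ac}|$, where $|\cdot|$ is Euclidean length. *)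

(* Defs.v *)
From Stdlib Require Import Reals List.
Open Scope R_scope.

Definition pt := (R * R)%type.

Definition dist (p q : pt) : R :=
  sqrt ((fst p - fst q) ^ 2 + (snd p - snd q) ^ 2).

(* alpha (in radians) is a slope of the segment uv: the counterclockwise
   angle of v - u from the positive x-axis (= the clockwise rotation angle
   about u bringing uv onto the positive x-axis). Defined modulo 2*PI. *)
Definition has_slope (u v : pt) (alpha : R) : Prop :=
  u <> v /\
  fst v - fst u = dist u v * cos alpha /\
  snd v - snd u = dist u v * sin alpha.

Definition theta_edge (theta : R) (u v : pt) : Prop :=
  exists alpha, has_slope u v alpha /\
    theta - PI / 4 <= alpha <= theta + PI / 4.

Definition origin : pt := (0, 0).

Definition theta_path (theta : R) (P : list pt) : Prop :=
  forall i : nat, (S i < length P)%nat ->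
    theta_edge theta (nth i P origin) (nth (S i) P origin).

(* A position along the path: edge index i (edge from p_{i+1} to p_{i+2} in
   1-based terms) and local parameter lam in [0,1]. *)
Definition valid_pos (P : list pt) (i : nat) (lam : R) : Prop :=
  (S i < length P)%nat /\ 0 <= lam <= 1.

Definition path_point (P : list pt) (i : nat) (lam : R) : pt :=
  let a := nth i P origin in
  let b := nth (S i) P origin in
  (fst a + lam * (fst b - fst a), snd a + lam * (snd b - snd a)).

Definition pos_le (i : nat) (lam : R) (j : nat) (mu : R) : Prop :=
  (i < j)%nat \/ (i = j /\ lam <= mu).

Definition self_approaching (P : list pt) : Prop :=
  forall (i1 i2 i3 : nat) (l1 l2 l3 : R),
    valid_pos P i1 l1 -> valid_pos P i2 l2 -> valid_pos P i3 l3 ->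
    pos_le i1 l1 i2 l2 -> pos_le i2 l2 i3 l3 ->
    let a := path_point P i1 l1 in
    let b := path_point P i2 l2 in
    let c := path_point P i3 l3 in
    a <> b -> b <> c -> a <> c ->
    dist b c < dist a c.

Definition increasing_chord (P : list pt) : Prop :=
  self_approaching P /\ self_approaching (rev P).

(* Main.v *)
Require Import Defs.
From Stdlib Require Import Reals List Lra Lia Psatz.
Open Scope R_scope.

Definition lin (k1 k2 : R) (p : pt) : R := k1 * fst p + k2 * snd p.

Lemma edge_mono (theta : R) (u v : pt) :
  theta_edge theta u v ->
  lin (cos theta + sin theta) (sin theta - cos theta) u <=
  lin (cos theta + sin theta) (sin theta - cos theta) v /\
  lin (cos theta - sin theta) (sin theta + cos theta) u <=
  lin (cos theta - sin theta) (sin theta + cos theta) v.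
Proof.
  intros [al [[Hne [Hx Hy]] Hr]].
  unfold lin.
  set (d := Defs.dist u v) in *.
  assert (Hd : 0 <= d) by (unfold d, Defs.dist; apply sqrt_pos).
  set (de := al - theta).
  assert (Ea : al = theta + de) by (unfold de; ring).
  rewrite Ea in Hx, Hy. rewrite cos_plus in Hx. rewrite sin_plus in Hy.
  assert (Hq : 0 < 1 / sqrt 2).
  { apply Rdiv_lt_0_compat; [lra|]. apply sqrt_lt_R0; lra. }
  pose proof PI_RGT_0.
  assert (H1 : 0 <= cos (de + PI/4)) by (apply cos_ge_0; unfold de; lra).
  assert (H2 : 0 <= sin (de + PI/4)) by (apply sin_ge_0; unfold de; lra).
  rewrite cos_plus, cos_PI4, sin_PI4 in H1.
  rewrite sin_plus, cos_PI4, sin_PI4 in H2.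
  assert (C1 : 0 <= cos de - sin de) by nra.
  assert (C2 : 0 <= cos de + sin de) by nra.
  pose proof (sin2_cos2 theta) as Hsc.
  set (c := cos theta) in *. set (s := sin theta) in *.
  assert (E1 : (c + s) * fst v + (s - c) * snd v - ((c + s) * fst u + (s - c) * snd u)
     = d * (cos de - sin de) * (s^2 + c^2)).
  { replace ((c + s) * fst v + (s - c) * snd v - ((c + s) * fst u + (s - c) * snd u))
      with ((c + s) * (fst v - fst u) + (s - c) * (snd v - snd u)) by ring.
    rewrite Hx, Hy. ring. }
  assert (E2 : (c - s) * fst v + (s + c) * snd v - ((c - s) * fst u + (s + c) * snd u)
     = d * (cos de + sin de) * (s^2 + c^2)).
  { replace ((c - s) * fst v + (s + c) * snd v - ((c - s) * fst u + (s + c) * snd u))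
      with ((c - s) * (fst v - fst u) + (s + c) * (snd v - snd u)) by ring.
    rewrite Hx, Hy. ring. }
  assert (Hsc' : s^2 + c^2 = 1) by (unfold Rsqr in Hsc; rewrite <- Hsc; ring).
  rewrite Hsc' in E1, E2.
  split; nra.
Qed.

Lemma mono_nth (f : pt -> R) (P : list pt) :
  (forall i, (S i < length P)%nat -> f (nth i P origin) <= f (nth (S i) P origin)) ->
  forall i j, (i <= j)%nat -> (j < length P)%nat -> f (nth i P origin) <= f (nth j P origin).
Proof.
  intros H i j. induction j; intros Hij Hj.
  - assert (i = 0%nat) by lia. subst. lra.
  - destruct (Nat.eq_dec i (S j)). subst; lra.
    apply Rle_trans with (f (nth j P origin)).
    apply IHj; lia. apply H; lia.
Qed.

Lemma lin_pp k1 k2 P i lam :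
  lin k1 k2 (path_point P i lam) =
  lin k1 k2 (nth i P origin) + lam * (lin k1 k2 (nth (S i) P origin) - lin k1 k2 (nth i P origin)).
Proof. unfold lin, path_point; simpl; ring. Qed.

Lemma pos_mono k1 k2 P :
  (forall i, (S i < length P)%nat -> lin k1 k2 (nth i P origin) <= lin k1 k2 (nth (S i) P origin)) ->
  forall i l j m, valid_pos P i l -> valid_pos P j m -> pos_le i l j m ->
  lin k1 k2 (path_point P i l) <= lin k1 k2 (path_point P j m).
Proof.
  intros H i l j m [Hi Hl] [Hj Hm] Hle.
  rewrite !lin_pp.
  pose proof (H i Hi). pose proof (H j Hj).
  destruct Hle as [Hlt | [-> Hlm]].
  - assert (lin k1 k2 (nth (S i) P origin) <= lin k1 k2 (nth j P origin)).
    { apply (mono_nth (lin k1 k2)); auto; lia. }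
    nra.
  - nra.
Qed.

Definition dotd (x y z : pt) : R :=
  (fst y - fst x) * (fst z - fst y) + (snd y - snd x) * (snd z - snd y).

Lemma core theta P :
  theta_path theta P ->
  forall i1 l1 i2 l2 i3 l3,
    valid_pos P i1 l1 -> valid_pos P i2 l2 -> valid_pos P i3 l3 ->
    pos_le i1 l1 i2 l2 -> pos_le i2 l2 i3 l3 ->
    0 <= dotd (path_point P i1 l1) (path_point P i2 l2) (path_point P i3 l3).
Proof.
  intros HP i1 l1 i2 l2 i3 l3 V1 V2 V3 L12 L23.
  pose proof (sin2_cos2 theta) as Hsc.
  set (c := cos theta) in *. set (s := sin theta) in *.
  assert (M1 : forall i, (S i < length P)%nat ->
     lin (c + s) (s - c) (nth i P origin) <= lin (c + s) (s - c) (nth (S i) P origin)).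
  { intros i Hi. apply (edge_mono theta), HP; auto. }
  assert (M2 : forall i, (S i < length P)%nat ->
     lin (c - s) (s + c) (nth i P origin) <= lin (c - s) (s + c) (nth (S i) P origin)).
  { intros i Hi. apply (edge_mono theta), HP; auto. }
  pose proof (pos_mono _ _ P M1 _ _ _ _ V1 V2 L12) as A1.
  pose proof (pos_mono _ _ P M1 _ _ _ _ V2 V3 L23) as A2.
  pose proof (pos_mono _ _ P M2 _ _ _ _ V1 V2 L12) as B1.
  pose proof (pos_mono _ _ P M2 _ _ _ _ V2 V3 L23) as B2.
  set (x := path_point P i1 l1) in *.
  set (y := path_point P i2 l2) in *.
  set (z := path_point P i3 l3) in *.
  unfold lin in *. unfold dotd.
  destruct x as [x1 x2]; destruct y as [y1 y2]; destruct z as [z1 z2]; simpl in *.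
  assert (E : ((c+s)*(y1-x1)+(s-c)*(y2-x2))*((c+s)*(z1-y1)+(s-c)*(z2-y2))
           + ((c-s)*(y1-x1)+(s+c)*(y2-x2))*((c-s)*(z1-y1)+(s+c)*(z2-y2))
           = 2*(s^2+c^2)*((y1-x1)*(z1-y1)+(y2-x2)*(z2-y2))) by ring.
  assert (Hsc' : s^2 + c^2 = 1) by (unfold Rsqr in Hsc; rewrite <- Hsc; ring).
  rewrite Hsc' in E.
  assert (0 <= ((c+s)*(y1-x1)+(s-c)*(y2-x2))*((c+s)*(z1-y1)+(s-c)*(z2-y2))).
  { apply Rmult_le_pos; lra. }
  assert (0 <= ((c-s)*(y1-x1)+(s+c)*(y2-x2))*((c-s)*(z1-y1)+(s+c)*(z2-y2))).
  { apply Rmult_le_pos; lra. }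
  lra.
Qed.

Lemma dist_lt (x y z : pt) : 0 <= dotd x y z -> x <> y -> Defs.dist y z < Defs.dist x z.
Proof.
  intros Hd Hne. unfold Defs.dist, dotd in *.
  destruct x as [x1 x2]; destruct y as [y1 y2]; destruct z as [z1 z2]; simpl in *.
  assert (Hp : 0 < (y1 - x1)^2 + (y2 - x2)^2).
  { destruct (Rlt_or_le 0 ((y1 - x1)^2 + (y2 - x2)^2)) as [h|h]; auto.
    exfalso. apply Hne. pose proof (pow2_ge_0 (y1 - x1)). pose proof (pow2_ge_0 (y2 - x2)).
    assert (h1 : (y1 - x1)^2 = 0) by lra. assert (h2 : (y2 - x2)^2 = 0) by lra.
    assert (y1 - x1 = 0) by (destruct (Req_dec (y1 - x1) 0); auto; exfalso; apply (pow_nonzero _ 2) in H1; auto).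
    assert (y2 - x2 = 0) by (destruct (Req_dec (y2 - x2) 0); auto; exfalso; apply (pow_nonzero _ 2) in H2; auto).
    f_equal; lra. }
  apply sqrt_lt_1_alt. split.
  - pose proof (pow2_ge_0 (z1 - y1)). pose proof (pow2_ge_0 (z2 - y2)). lra.
  - replace ((z1 - x1)^2 + (z2 - x2)^2) with ((z1 - y1)^2 + (z2 - y2)^2 + ((y1 - x1)^2 + (y2 - x2)^2) + 2 * ((y1 - x1) * (z1 - y1) + (y2 - x2) * (z2 - y2))) by ring.
    lra.
Qed.

Lemma dotd_sym x y z : dotd x y z = dotd z y x.
Proof. unfold dotd; ring. Qed.

Lemma rev_pp (P : list pt) i lam :
  (S i < length P)%nat ->
  path_point (rev P) i lam = path_point P (length P - 2 - i) (1 - lam).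
Proof.
  intros H. unfold path_point.
  rewrite !rev_nth by lia.
  replace (length P - S (S i))%nat with (length P - 2 - i)%nat by lia.
  replace (length P - S i)%nat with (S (length P - 2 - i)) by lia.
  f_equal; ring.
Qed.

Theorem lemma3 (theta : R) (P : list pt) :
  theta_path theta P -> increasing_chord P.
Proof.
  intros HP. split.
  - intros i1 i2 i3 l1 l2 l3 V1 V2 V3 L12 L23. cbv zeta. intros Hab Hbc Hac.
    apply dist_lt; auto. eapply core; eauto.
  - intros i1 i2 i3 l1 l2 l3 V1 V2 V3 L12 L23. cbv zeta. intros Hab Hbc Hac.
    pose proof V1 as [W1 _]. pose proof V2 as [W2 _]. pose proof V3 as [W3 _].
    rewrite length_rev in W1, W2, W3.
    rewrite !rev_pp in * by lia.
    apply dist_lt; auto.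
    rewrite dotd_sym.
    destruct V1 as [_ V1]; destruct V2 as [_ V2]; destruct V3 as [_ V3].
    apply (core theta P HP).
    all: try (split; [lia|lra]).
    all: unfold pos_le in *.
    all: destruct L12 as [?|[? ?]]; destruct L23 as [?|[? ?]]; subst;
      try (left; lia); right; split; try lia; lra.
Qed.
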